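(* Let $\mathcal{D}$ be a distribution on $[n]$, $\varepsilon>0$, and let $\mathcal{P}$ be any bounded-derivative property of functions $f:[n]\to\mathbb{R}$. There is a tester for $\mathcal{P}$ with respect to $\mathcal{D}$ with proximity parameter $\varepsilon$ making $24\,\varepsilon^{-1}\Delta^*(\mathcal{D})$ queries.
   Context: A bounded-derivative property on $[n]$ is $\mathcal{P}=\{g:[n]\to\mathbb{R}: l(t)\le g(t+1)-g(t)\le u(t)\ \forall t\in[n-1]\}$ for some $l,u:[n-1]\to\mathbb{R}$ with $l(t)<u(t)$. A tester w.r.t. $\mathcal{D}$ with proximity parameter $\varepsilon$ knows $\mathcal{D}$, queries $f$, accepts with probability $>2/3$ if $f\in\mathcal{P}$ and rejects with probability $>2/3$ if $\min_{g\in\mathcal{P}}\Pr_{x\sim\mathcal{D}}[f(x)\ne g(x)]>\varepsilon$. $\Delta^*(\mathcal{D})$ is the minimum over binary search trees $T$ on $[n]$ of $\mathbb{E}_{v\sim\mathcal{D}}[\mathrm{depth}_T(v)]$, where depth is the number of edges to the root. *)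

(* Defs.v *)
From HB Require Import structures.
From mathcomp Require Import all_boot all_order all_algebra.
From mathcomp Require Import boolp classical_sets reals.
Set Implicit Arguments. Unset Strict Implicit. Unset Printing Implicit Defensive.
Import Order.TTheory GRing.Theory Num.Theory.
Local Open Scope ring_scope.

Section Defs.
Variable R : realType.

(* [n] is represented by 'I_n = {0,...,n-1}; point t and t+1 are consecutive. *)

Definition is_distr (n : nat) (D : 'I_n -> R) : Prop :=
  (forall x, 0 <= D x) /\ \sum_(x < n) D x = 1.

Definition bdp_params (n : nat) (l u : nat -> R) : Prop :=
  forall t : nat, (t.+1 < n)%N -> l t < u t.

Definition in_bdp (n : nat) (l u : nat -> R) (g : 'I_n -> R) : Prop :=
  forall i j : 'I_n, nat_of_ord j = (nat_of_ord i).+1 ->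
    l i <= g j - g i <= u i.

Definition distD (n : nat) (D : 'I_n -> R) (f g : 'I_n -> R) : R :=
  \sum_(x < n | f x != g x) D x.

(* min_{g in P} Pr_D[f <> g] > eps  (the minimum is attained, so this is
   equivalent to: every g in P has distance > eps). *)
Definition far_from_bdp (n : nat) (D : 'I_n -> R) (l u : nat -> R)
    (eps : R) (f : 'I_n -> R) : Prop :=
  forall g, in_bdp l u g -> distD D f g > eps.

(* Deterministic adaptive query algorithms: trees with real-valued answers. *)
Inductive qtree (n : nat) : Type :=
  | Decide : bool -> qtree n
  | Query : 'I_n -> (R -> qtree n) -> qtree n.

Fixpoint run (n : nat) (t : qtree n) (f : 'I_n -> R) : bool :=
  match t with
  | Decide b => b
  | Query x k => run (k (f x)) f
  end.

Inductive queries_le (n : nat) : nat -> qtree n -> Prop :=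
  | ql_decide q b : queries_le q (Decide n b)
  | ql_query q x k : (forall a, queries_le q (k a)) ->
      queries_le q.+1 (Query x k).

(* A randomized tester: a probability distribution p over a finite set of
   random seeds, each seed determining a deterministic query algorithm. *)
Definition accept_prob (n : nat) (Omega : finType) (p : Omega -> R)
    (T : Omega -> qtree n) (f : 'I_n -> R) : R :=
  \sum_(w : Omega | run (T w) f) p w.

Definition is_tester (n : nat) (D : 'I_n -> R) (l u : nat -> R) (eps : R)
    (q : nat) (Omega : finType) (p : Omega -> R) (T : Omega -> qtree n) : Prop :=
  [/\ (forall w, 0 <= p w), \sum_(w : Omega) p w = 1,
      (forall w, queries_le q (T w)),
      (forall f, in_bdp l u f -> accept_prob p T f > 2%:R / 3%:R) &
      (forall f, far_from_bdp D l u eps f ->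
                 1 - accept_prob p T f > 2%:R / 3%:R)].

Inductive bst : Type :=
  | Leaf : bst
  | Node : bst -> nat -> bst -> bst.

Fixpoint inorder (T : bst) : seq nat :=
  match T with
  | Leaf => [::]
  | Node a k b => inorder a ++ k :: inorder b
  end.

Definition is_bst_on (n : nat) (T : bst) : Prop := inorder T = iota 0 n.

Fixpoint depth (T : bst) (v : nat) : nat :=
  match T with
  | Leaf => 0
  | Node a k b =>
      if v == k then 0
      else if v \in inorder a then (depth a v).+1 else (depth b v).+1
  end.

Definition exp_depth (n : nat) (D : 'I_n -> R) (T : bst) : R :=
  \sum_(v < n) D v * (depth T v)%:R.

(* Delta^*(D) = min over BSTs T on [n] of E_{v ~ D}[depth_T(v)]
   (inf of a finite nonempty set of values, hence a min). *)
Definition Delta_star (n : nat) (D : 'I_n -> R) : R :=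
  inf [set c | exists T, is_bst_on n T /\ c = exp_depth D T].

End Defs.

(* Main.v *)
Require Import Defs.
From HB Require Import structures.
From mathcomp Require Import all_boot all_order all_algebra.
From mathcomp Require Import boolp classical_sets reals.
From mathcomp Require Import lra ring zify.
Import Order.TTheory GRing.Theory Num.Theory.

Fixpoint fp (T : bst) (v : nat) : seq nat :=
  match T with
  | Leaf => [::]
  | Node a k b => k :: (if v == k then [::]
                       else if v \in inorder a then fp a v else fp b v)
  end.

Lemma fp_size T v : v \in inorder T -> size (fp T v) = (depth T v).+1.
Proof.
elim: T => [//|a IHa k b IHb] /=; rewrite mem_cat in_cons.
case: eqP => [//|_]; case: ifP => [Ha _|Ha]; first by rewrite IHa.
by rewrite /= => /IHb ->.
Qed.

Lemma fp_self T v : v \in inorder T -> v \in fp T v.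
Proof.
elim: T => [//|a IHa k b IHb] /=; rewrite mem_cat !in_cons.
case: eqP => [->|_] //.
case: ifP => [Ha _|Ha /= Hb]; first by rewrite IHa // orbT.
by rewrite IHb // orbT.
Qed.

Lemma fp_sub T v y : y \in fp T v -> y \in inorder T.
Proof.
elim: T => [//|a IHa k b IHb] /=; rewrite in_cons mem_cat in_cons.
case/orP=> [->|]; first by rewrite orbT.
case: eqP => [//|_]; case: ifP => [_ /IHa ->//|_ /IHb ->]; by rewrite !orbT.
Qed.

Lemma fp_head a k b v : fp (Node a k b) v = k :: behead (fp (Node a k b) v).
Proof. by []. Qed.

Lemma depth0 a k b v : depth (Node a k b) v = 0%N -> v = k.
Proof. by rewrite /=; case: eqP => // _; case: ifP. Qed.

Lemma lca T x y : pairwise ltn (inorder T) -> x \in inorder T -> y \in inorder T ->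
  (x < y)%N -> exists z, [/\ z \in fp T x, z \in fp T y & (x <= z <= y)%N].
Proof.
elim: T => [//|a IHa k b IHb] /=.
rewrite pairwise_cat /= => /and3P[Hab Hpa /andP[Hkb Hpb]].
rewrite !mem_cat !in_cons => Hx Hy Hxy.
have Ha w : w \in inorder a -> (w < k)%N.
  by move=> Hw; move/allrelP: Hab => /(_ w k Hw); rewrite in_cons eqxx; apply.
have Hb w : w \in inorder b -> (k < w)%N by move=> Hw; move/allP: Hkb => /(_ w Hw).
case: (x =P k) => [Exk|Nxk].
  exists k; split; rewrite ?in_cons ?eqxx //; lia.
case: (y =P k) => [Eyk|Nyk].
  exists k; split; rewrite ?in_cons ?eqxx //; lia.
case: ifP => Hxa; case: ifP => Hya.
- have [z [H1 H2 H3]] := IHa Hpa Hxa Hya Hxy.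
  by exists z; split; rewrite ?in_cons ?H1 ?H2 ?orbT.
- exists k; split; rewrite ?in_cons ?eqxx //.
  have := Ha _ Hxa; have : y \in inorder b.
    by move: Hy; rewrite Hya /=; case/orP=> // /eqP.
  move/Hb; lia.
- have : x \in inorder b by move: Hx; rewrite Hxa /=; case/orP=> // /eqP.
  move/Hb => h1; have := Ha _ Hya; lia.
- have Hxb : x \in inorder b by move: Hx; rewrite Hxa /=; case/orP=> // /eqP.
  have Hyb : y \in inorder b by move: Hy; rewrite Hya /=; case/orP=> // /eqP.
  have [z [H1 H2 H3]] := IHb Hpb Hxb Hyb Hxy.
  by exists z; split; rewrite ?in_cons ?H1 ?H2 ?orbT.
Qed.
Arguments fp_size {T v}. Arguments fp_self {T v}. Arguments fp_sub {T v y}.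

Local Open Scope ring_scope.

Section Cns.
Variable R : realType.
Variables (l u : nat -> R).

Definition Ls a b := \sum_(a <= t < b) l t.
Definition Us a b := \sum_(a <= t < b) u t.
Definition Cns (h : nat -> R) x y := (Ls x y <= h y - h x) && (h y - h x <= Us x y).
Definition Cnsc h x y := if (x <= y)%N then Cns h x y else Cns h y x.
Definition good h T x := all (Cnsc h x) (fp T x).

Lemma Cns_refl h x : Cns h x x.
Proof. by rewrite /Cns /Ls /Us !big_geq // subrr lexx. Qed.

Lemma Cns_trans h x z y : (x <= z <= y)%N -> Cns h x z -> Cns h z y -> Cns h x y.
Proof.
move=> /andP[h1 h2] /andP[a1 a2] /andP[b1 b2].
rewrite /Cns /Ls /Us (@big_cat_nat _ _ _ z) // [X in _ && (_ <= X)](@big_cat_nat _ _ _ z) //=.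
rewrite -/(Ls x z) -/(Ls z y) -/(Us x z) -/(Us z y).
apply/andP; split; lra.
Qed.

Lemma good_pair h T x y : pairwise ltn (inorder T) -> x \in inorder T -> y \in inorder T ->
  good h T x -> good h T y -> (x <= y)%N -> Cns h x y.
Proof.
move=> Hp Hx Hy Gx Gy; rewrite leq_eqVlt => /orP[/eqP->|Hxy]; first exact: Cns_refl.
have [z [H1 H2 /andP[H3 H4]]] := @lca T x y Hp Hx Hy Hxy.
apply: (@Cns_trans h x z y); first by rewrite H3 H4.
  by move/allP: Gx => /(_ z H1); rewrite /Cnsc H3.
move/allP: Gy => /(_ z H2); rewrite /Cnsc.
case: ifP => // Hyz; have -> : z = y by apply/eqP; rewrite eqn_leq H4 Hyz.
by rewrite Cns_refl.
Qed.

Definition Mx (F : nat -> R) x0 (r : seq nat) :=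
  foldr (fun s acc => Num.max (F s) acc) x0 r.

Lemma Mx_ge F x0 r s : s \in r -> F s <= Mx F x0 r.
Proof.
elim: r => [//|a r IH]; rewrite in_cons /= le_max => /orP[/eqP->|/IH ->];
  by rewrite ?lexx ?orbT.
Qed.

Lemma Mx_ge0 F x0 r : x0 <= Mx F x0 r.
Proof. by elim: r => [|a r IH] /=; rewrite ?lexx // le_max IH orbT. Qed.

Lemma Mx_le F x0 r c : x0 <= c -> (forall s, s \in r -> F s <= c) -> Mx F x0 r <= c.
Proof.
move=> H0; elim: r => [//|a r IH] H /=; rewrite ge_max H ?mem_head //=.
by apply: IH => s Hs; apply: H; rewrite in_cons Hs orbT.
Qed.

Lemma Mx_shift F G x0 y0 r a : (forall s, F s <= G s + a) -> x0 <= y0 + a ->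
  Mx F x0 r <= Mx G y0 r + a.
Proof.
move=> HF H0; apply: Mx_le.
  by apply: le_trans H0 _; rewrite lerD2r Mx_ge0.
move=> s Hs; apply: le_trans (HF s) _; by rewrite lerD2r Mx_ge.
Qed.

Definition LL x s := if (s <= x)%N then Ls s x else - Us x s.

Lemma LL_step i s : LL i.+1 s = LL i s + (if (s <= i)%N then l i else u i).
Proof.
rewrite /LL; case: (leqP s i) => Hsi.
  by rewrite (leq_trans Hsi) // /Ls big_nat_recr.
case: (leqP s i.+1) => Hs.
  have -> : s = i.+1 by apply/eqP; rewrite eqn_leq Hs Hsi.
  rewrite /Ls /Us big_geq // big_nat1; lra.
rewrite /Us [X in _ = - X + _]big_ltn; [lra|exact: ltnW Hs].
Qed.


Definition ext h s0 S x := Mx (fun s => h s + LL x s) (h s0 + LL x s0) S.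

Lemma ext_step h s0 S i : l i <= u i -> l i <= ext h s0 S i.+1 - ext h s0 S i <= u i.
Proof.
move=> lui.
have Hl s : h s + LL i s <= h s + LL i.+1 s + - l i.
  rewrite LL_step; case: ifP => _; lra.
have Hu s : h s + LL i.+1 s <= h s + LL i s + u i.
  rewrite LL_step; case: ifP => _; lra.
have := @Mx_shift _ _ _ _ S _ Hl (Hl s0); have := @Mx_shift _ _ _ _ S _ Hu (Hu s0).
rewrite /ext => a b; apply/andP; split; lra.
Qed.

Lemma ext_eq h s0 S x : s0 \in S -> x \in S ->
  (forall a b, a \in S -> b \in S -> (a <= b)%N -> Cns h a b) -> ext h s0 S x = h x.
Proof.
move=> Hs0 Hx HC.
have key s : s \in S -> h s + LL x s <= h x.
  move=> Hs; rewrite /LL; case: leqP => Hsx.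
    by have /andP[a b] := HC _ _ Hs Hx Hsx; lra.
  by have /andP[a b] := HC _ _ Hx Hs (ltnW Hsx); lra.
apply/eqP; rewrite eq_le; apply/andP; split.
  by apply: Mx_le; [apply: key|].
apply: (le_trans _ (@Mx_ge _ _ S x Hx)).
by rewrite /LL leqnn /Ls big_geq // addr0.
Qed.

End Cns.
Arguments Ls {R}. Arguments Us {R}. Arguments Cns {R}. Arguments Cnsc {R}.
Arguments good {R}. Arguments LL {R}. Arguments ext {R}. Arguments Mx {R}.
Arguments Cns_refl {R}. Arguments Cns_trans {R}. Arguments good_pair {R}.
Arguments ext_step {R}. Arguments ext_eq {R}.


Section Q.
Variable R : realType.
Variable n : nat.

Fixpoint qall (xs : seq 'I_n) (K : ('I_n -> R) -> bool) : qtree R n :=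
  match xs with
  | [::] => Decide R n (K (fun _ => 0))
  | x :: xs => Query x (fun a => qall xs (fun h => K (fun y => if y == x then a else h y)))
  end.

Lemma run_qall xs K f : run (qall xs K) f = K (fun y => if y \in xs then f y else 0).
Proof.
elim: xs K => [|x xs IH] K /=; first by congr K; apply: funext => y.
rewrite IH; congr K; apply: funext => y; rewrite in_cons.
by case: eqP => [->|].
Qed.

Lemma queries_qall xs K : queries_le (size xs) (qall xs K).
Proof.
elim: xs K => [|x xs IH] K /=; first by constructor.
by constructor => a; apply: IH.
Qed.

Lemma queries_mono q (t : qtree R n) : queries_le q t -> forall q', (q <= q')%N -> queries_le q' t.
Proof.
elim=> [q0 b|q0 x k _ IH] q' H; first by constructor.
case: q' H => [//|q'] H; constructor => a; exact: IH.
Qed.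

Variable k : nat.
Variable D : 'I_n -> R.

Definition pw (w : {ffun 'I_k -> 'I_n}) := \prod_i D (w i).

Lemma sum_prod (F : 'I_k -> 'I_n -> R) :
  \sum_(w : {ffun 'I_k -> 'I_n}) \prod_i F i (w i) = \prod_i \sum_x F i x.
Proof. by rewrite bigA_distr_bigA. Qed.

Lemma sum_pw : \sum_w pw w = (\sum_x D x) ^+ k.
Proof. by rewrite /pw (sum_prod (fun _ x => D x)) prodr_const card_ord. Qed.

Lemma marginal (i : 'I_k) (F : 'I_n -> R) : \sum_x D x = 1 ->
  \sum_(w : {ffun 'I_k -> 'I_n}) pw w * F (w i) = \sum_x D x * F x.
Proof.
move=> H1.
transitivity (\sum_(w : {ffun 'I_k -> 'I_n})
     \prod_j (if j == i then D (w j) * F (w j) else D (w j))).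
  apply: eq_bigr => w _; rewrite /pw (bigD1 i) //= [RHS](bigD1 i) //= eqxx.
  rewrite mulrAC; congr (_ * _); apply: eq_bigr => j /negbTE ->; done.
rewrite (sum_prod (fun j x => if j == i then D x * F x else D x)) (bigD1 i) //= eqxx.
by rewrite [X in _ * X]big1 ?mulr1 // => j /negbTE ->.
Qed.

Lemma prod_nat_forall (P : pred 'I_n) (w : {ffun 'I_k -> 'I_n}) :
  \prod_i ((P (w i))%:R : R) = ([forall i, P (w i)])%:R.
Proof.
case: (boolP [forall i, P (w i)]) => [/forallP H|]; first by rewrite big1 // => i _; rewrite H.
rewrite negb_forall => /existsP[i Hi].
by rewrite (bigD1 i) //= (negbTE Hi) mul0r.
Qed.

Lemma allgood (P : pred 'I_n) :
  \sum_(w : {ffun 'I_k -> 'I_n}) pw w * ([forall i, P (w i)])%:R =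
  (\sum_x D x * (P x)%:R) ^+ k.
Proof.
transitivity (\sum_(w : {ffun 'I_k -> 'I_n}) \prod_i (D (w i) * (P (w i))%:R)).
  by apply: eq_bigr => w _; rewrite big_split /= prod_nat_forall.
by rewrite (sum_prod (fun _ x => D x * (P x)%:R)) prodr_const card_ord.
Qed.

End Q.
Arguments qall {R n}. Arguments run_qall {R n}. Arguments queries_qall {R n}.
Arguments queries_mono {R n}. Arguments pw {R n k}. Arguments sum_pw {R n k}.
Arguments marginal {R n k}. Arguments allgood {R n k}. Arguments sum_prod {R n k}.


Section Main.
Variable R : realType.
Variable m : nat.
Local Notation n := m.+1.
Variables (l u : nat -> R).
Hypothesis Hlu : bdp_params n l u.

Definition fn (f : 'I_n -> R) (y : nat) := f (inord y).

Lemma fn_ord f (x : 'I_n) : fn f x = f x.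
Proof. by rewrite /fn inord_val. Qed.

Lemma ext_g (f : 'I_n -> R) s0 (S : seq nat) : s0 \in S ->
  (forall a b, a \in S -> b \in S -> (a <= b)%N -> Cns l u (fn f) a b) ->
  exists g : 'I_n -> R, in_bdp l u g /\ forall x : 'I_n, val x \in S -> g x = f x.
Proof.
move=> Hs0 HC; exists (fun x : 'I_n => ext l u (fn f) s0 S x); split.
  move=> i j Hj; rewrite Hj; apply: ext_step; apply: ltW; apply: Hlu.
  by rewrite -Hj ltn_ord.
by move=> x Hx; rewrite ext_eq // fn_ord.
Qed.

Lemma dist_bound (D : 'I_n -> R) f g (S : seq nat) : (forall x, 0 <= D x) ->
  (forall x : 'I_n, val x \in S -> g x = f x) ->
  distD D f g <= \sum_(x < n | val x \notin S) D x.
Proof.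
move=> HD Hg; rewrite /distD big_mkcond [X in _ <= X]big_mkcond /=.
apply: ler_sum => x _; case: ifP => Hfg.
  case: ifP => // /negbFE /Hg Hx; by move: Hfg; rewrite Hx eqxx.
by case: ifP.
Qed.

Lemma inbdp_cons f : in_bdp l u f -> forall y x, (x <= y)%N -> (y < n)%N -> Cns l u (fn f) x y.
Proof.
move=> Hf; elim=> [|y IH] x Hxy Hy.
  have -> : x = 0%N by lia.
  by apply: Cns_refl.
case: (x =P y.+1) => [->|Nx]; first exact: Cns_refl.
apply: (@Cns_trans _ l u _ x y y.+1); first by apply/andP; split; lia.
  by apply: IH; lia.
have := Hf (inord y) (inord y.+1).
rewrite !inordK; try lia.
move=> /(_ erefl) /andP[a b].
by rewrite /Cns /Ls /Us !big_nat1 /fn a b.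
Qed.

End Main.


Section Tester.
Variable R : realType.
Variable m : nat.
Local Notation n := m.+1.
Variables (l u : nat -> R).
Variables (a : bst) (r : nat) (b : bst).
Local Notation T := (Node a r b).
Hypothesis HT : inorder T = iota 0 n.
Variables (k B : nat).

Lemma inT (x : 'I_n) : val x \in inorder T.
Proof. by rewrite HT mem_iota /= ltn_ord. Qed.

Definition Lq (w : {ffun 'I_k -> 'I_n}) : seq 'I_n :=
  inord r :: flatten [seq [seq inord y | y <- behead (fp T (w i))] | i <- enum 'I_k].

Definition Sdep (w : {ffun 'I_k -> 'I_n}) := (\sum_i depth T (w i))%N.

Definition dec (w : {ffun 'I_k -> 'I_n}) (h : 'I_n -> R) :=
  [forall i, good l u (fun y => h (inord y)) T (w i)].

Definition Tw w : qtree R n :=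
  if (Sdep w < B)%N then qall (Lq w) (dec w) else Decide R n true.

Lemma size_Lq w : size (Lq w) = (Sdep w).+1.
Proof.
rewrite /= size_flatten /shape -map_comp /Sdep sumnE big_map.
congr S; rewrite big_enum /=; apply: eq_bigr => i _.
by rewrite size_map; have /= [] := fp_size (inT (w i)).
Qed.

Lemma queries_Tw w : queries_le B (Tw w).
Proof.
rewrite /Tw; case: ifP => H; last by constructor.
apply: (queries_mono _ _ (queries_qall (Lq w) (dec w))); by rewrite size_Lq.
Qed.

Lemma good_ext h1 h2 x : (forall y, y \in fp T x -> h1 y = h2 y) -> x \in fp T x ->
  good l u h1 T x = good l u h2 T x.
Proof.
move=> H Hx; apply: eq_in_all => y Hy.
by rewrite /Cnsc /Cns !H.
Qed.

Lemma run_Tw w f : run (Tw w) f = ~~ (Sdep w < B)%N || dec w f.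
Proof.
rewrite /Tw; case: ifP => _; last by []. rewrite run_qall /=; apply: eq_forallb => i.
apply: good_ext; last by apply: fp_self; apply: inT.
move=> y Hy; rewrite ifT //.
rewrite /Lq in_cons; move: Hy; rewrite fp_head in_cons => /orP[/eqP->|Hy]; first by rewrite eqxx.
apply/orP; right; apply/flatten_mapP; exists i; first by rewrite mem_enum.
by apply: map_f.
Qed.

End Tester.
Arguments Lq {m}. Arguments Sdep {m}. Arguments dec {R m}. Arguments Tw {R m}.
Arguments run_Tw {R m}. Arguments queries_Tw {R m}. Arguments size_Lq {m}.


Section Prob.
Variable R : realType.
Variable m : nat.
Local Notation n := m.+1.
Variables (l u : nat -> R).
Variables (a : bst) (r : nat) (b : bst).
Local Notation T := (Node a r b).
Hypothesis HT : inorder T = iota 0 n.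
Variables (k B : nat).
Variable D : 'I_n -> R.
Hypothesis HD : forall x, 0 <= D x.
Hypothesis H1 : \sum_x D x = 1.

Local Notation Tw := (Tw l u a r b k B).

Lemma pw_ge0 (w : {ffun 'I_k -> 'I_n}) : 0 <= pw D w.
Proof. by apply: prodr_ge0 => i _. Qed.

Lemma sum_pw1 : \sum_w pw (k:=k) D w = 1.
Proof. by rewrite sum_pw H1 expr1n. Qed.

Lemma sound f :
  let G := \sum_x D x * (good l u (fun y => f (inord y)) T x)%:R in
  exists M, [/\ 0 <= M, B%:R * M <= k%:R * exp_depth D T &
     1 - G ^+ k - M <= 1 - accept_prob (pw D) Tw f].
Proof.
move=> G.
set P : pred 'I_n := fun x => good l u (fun y => f (inord y)) T x.
exists (\sum_(w | ~~ (Sdep a r b k w < B)%N) pw D w); split.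
- by apply: sumr_ge0 => w _; apply: pw_ge0.
- rewrite mulr_sumr.
  apply: (@le_trans _ _ (\sum_w pw D w * (Sdep a r b k w)%:R)).
    rewrite [X in _ <= X](bigID (fun w => ~~ (Sdep a r b k w < B)%N)) /=.
    rewrite -[X in X <= _]addr0; apply: lerD.
      apply: ler_sum => w; rewrite -leqNgt => Hw.
      by rewrite mulrC ler_wpM2l ?pw_ge0 // ler_nat.
    by apply: sumr_ge0 => w _; rewrite mulr_ge0 ?pw_ge0.
  rewrite /Sdep.
  under eq_bigr do rewrite natr_sum mulr_sumr.
  rewrite exchange_big /=.
  under eq_bigr do rewrite (marginal D _ (fun x => (depth T x)%:R) H1).
  by rewrite sumr_const card_ord mulr_natl.
- have E1 : 1 - accept_prob (pw D) Tw f = \sum_(w | ~~ run (Tw w) f) pw D w.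
    by rewrite /accept_prob -sum_pw1 (bigID (fun w => run (Tw w) f)) /= addrC addrK.
  have E2 : \sum_(w | dec l u a r b k w f) pw D w = G ^+ k.
    rewrite -(allgood D P) big_mkcond /=; apply: eq_bigr => w _.
    rewrite /dec; case: ifP => _; by rewrite ?mulr1 ?mulr0.
  have E3 : \sum_(w | ~~ dec l u a r b k w f) pw D w = 1 - G ^+ k.
    rewrite -sum_pw1 [X in _ = X - _](bigID (fun w => dec l u a r b k w f)) /= E2; lra.
  rewrite E1 -E3 lerBlDr.
  rewrite [X in X <= _]big_mkcond [X in _ <= X + _]big_mkcond [X in _ <= _ + X]big_mkcond.
  rewrite -big_split /=; apply: ler_sum => w _; rewrite run_Tw.
  case: (Sdep a r b k w < B)%N; case: (dec l u a r b k w f) => /=;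
    rewrite ?addr0 ?add0r ?lexx ?pw_ge0 //.
  exact: HT.
Qed.

End Prob.


Lemma bern (R : realType) (e : R) k : 0 <= e ->
  2 + 2 * k%:R * e + k%:R * (k%:R - 1) * e ^+ 2 <= 2 * (1 + e) ^+ k.
Proof.
move=> He; elim: k => [|k IH]; first by rewrite !mul0r expr0; lra.
have hK : 0 <= (k%:R : R) by [].
have hKK : 0 <= (k%:R : R) * (k%:R - 1).
  by case: k {IH hK} => [|k]; rewrite ?mul0r // mulr_ge0 // -natr1 addrK.
rewrite (exprS (1 + e)) -[k.+1%:R]natr1.
have h1 : 0 <= 1 + e by lra.
have hf := ler_wpM2r h1 IH.
have h3 : 0 <= (k%:R : R) * (k%:R - 1) * e ^+ 3 by rewrite mulr_ge0 // exprn_ge0.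
have E1 : 2 * ((1 + e) * (1 + e) ^+ k) = 2 * (1 + e) ^+ k * (1 + e) by ring.
rewrite E1; apply: le_trans hf.
set K := (k%:R : R).
have E2 : (2 + 2 * K * e + K * (K - 1) * e ^+ 2) * (1 + e) -
  (2 + 2 * (K + 1) * e + (K + 1) * (K + 1 - 1) * e ^+ 2) = K * (K - 1) * e ^+ 3.
  by rewrite !exprS expr0; ring.
lra.
Qed.

Lemma pow_small (R : realType) (e : R) k : 0 < e -> e < 1 -> 3 <= k%:R * e ->
  (1 - e) ^+ k <= 1 / 7%:R.
Proof.
move=> e0 e1 hk.
have hb := @bern R e k (ltW e0).
have h7 : 7%:R <= (1 + e) ^+ k.
  have : k%:R * (k%:R - 1) * e ^+ 2 = (k%:R * e) * (k%:R * e - e) by rewrite expr2; ring.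
  move=> E; rewrite E in hb; nra.
have hp : (1 - e) ^+ k * (1 + e) ^+ k <= 1.
  by rewrite -exprMn exprn_ile1 //; nra.
have hn : 0 <= (1 - e) ^+ k by rewrite exprn_ge0 //; lra.
rewrite ler_pdivlMr; last by [].
nra.
Qed.


Definition comb (s : seq nat) := foldr (fun k acc => Node Leaf k acc) Leaf s.
Lemma comb_inorder s : inorder (comb s) = s.
Proof. by elim: s => //= x s ->. Qed.

Lemma good_inbdp (R : realType) m l u (f : 'I_m.+1 -> R) a r b :
  inorder (Node a r b) = iota 0 m.+1 -> in_bdp l u f ->
  forall x, x \in inorder (Node a r b) -> good l u (fun y => f (inord y)) (Node a r b) x.
Proof.
move=> HT Hf x Hx; apply/allP => y Hy.
have Hy' := fp_sub Hy; rewrite HT mem_iota in Hx; rewrite HT mem_iota in Hy'.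
move: Hy' Hx => /andP[_ hy] /andP[_ hx]; rewrite add0n in hx hy.
rewrite /Cnsc; case: leqP => h.
  exact: (@inbdp_cons R m l u f Hf y x h hy).
exact: (@inbdp_cons R m l u f Hf x y (ltnW h) hx).
Qed.

Lemma close_g (R : realType) m l u (f : 'I_m.+1 -> R) D s0 :
  bdp_params m.+1 l u -> (forall x, 0 <= D x) ->
  exists g, in_bdp l u g /\ distD D f g <= \sum_(x < m.+1 | val x \notin [:: s0]) D x.
Proof.
move=> Hlu HD.
have [g [Hg Hfg]] := @ext_g R m l u Hlu f s0 [:: s0] (mem_head _ _)
   (fun a b Ha Hb _ => ltac:(move: Ha Hb; rewrite !inE => /eqP-> /eqP->; exact: Cns_refl)).
by exists g; split => //; apply: dist_bound.
Qed.

Theorem theorem4p3 (R : realType) (n : nat) (D : 'I_n -> R) (eps : R)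
    (l u : nat -> R) :
  is_distr D -> 0 < eps -> bdp_params n l u ->
  exists (q : nat) (Omega : finType) (p : Omega -> R) (T : Omega -> qtree R n),
    q%:R <= 24%:R * eps^-1 * Delta_star D /\
    is_tester D l u eps q p T.
Proof.
move=> [HD H1] He Hlu.
case: n D HD H1 Hlu => [|m] D HD H1 Hlu.
  by move: H1; rewrite big_ord0 => /eqP; rewrite eq_sym oner_eq0.
set E : set R := fun c => exists T, is_bst_on m.+1 T /\ c = exp_depth D T.
have expge0 T : 0 <= exp_depth D T.
  by apply: sumr_ge0 => x _; rewrite mulr_ge0.
have hinf : has_inf E.
  split; first by exists (exp_depth D (comb (iota 0 m.+1))); exists (comb (iota 0 m.+1));
    split => //; rewrite /is_bst_on comb_inorder.
  by exists 0; move=> c [T [_ ->]]; apply: expge0.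
have Dge0 : 0 <= Delta_star D.
  apply: lb_le_inf; first by case: hinf.
  by move=> c [T [_ ->]]; apply: expge0.
have node T : is_bst_on m.+1 T -> exists a r b, T = Node a r b.
  by case: T => [//|a r b] _; exists a, r, b.
set Dl := Delta_star D.
case: (boolP ((eps <= Dl) && (eps < 1))) => [/andP[eD e1]|Hc].
-
  have Dpos : 0 < Dl by apply: lt_le_trans eD.
  have [c [T [HbT Ec]] Hc] := @inf_adherent R E (Dl / 21%:R) (divr_gt0 Dpos (ltr0Sn _ 20)) hinf.
  have Hc' : c < Dl + Dl / 21%:R := Hc.
  have [a [r [b ET]]] := node T HbT; subst T.
  have HT : inorder (Node a r b) = iota 0 m.+1 by exact: HbT.
  set B := Num.truncn (24%:R * eps^-1 * Dl).
  set k := (Num.truncn (3%:R / eps)).+1.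
  have x24 : 0 <= 24%:R * eps^-1 * Dl by rewrite mulr_ge0 // mulr_ge0 // invr_ge0 ltW.
  have hB1 : B%:R <= 24%:R * eps^-1 * Dl by rewrite truncn_le.
  have hB2 : 24%:R * eps^-1 * Dl < B%:R + 1 by rewrite natr1 truncnS_gt.
  have hk1 : 3%:R / eps < k%:R by rewrite truncnS_gt.
  have hk2 : k%:R <= 3%:R / eps + 1.
    by rewrite /k -natr1 lerD2r truncn_le divr_ge0 // ltW.
  exists B, {ffun 'I_k -> 'I_m.+1}, (pw D), (Tw l u a r b k B).
  split => //; split.
  + by move=> w; apply: pw_ge0.
  + exact: sum_pw1.
  + by move=> w; apply: queries_Tw.
  + move=> f Hf; rewrite /accept_prob.
    rewrite (eq_bigl xpredT); first by rewrite sum_pw1; lra.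
    move=> w; rewrite run_Tw // /dec; apply/orP; right; apply/forallP => i.
    apply: good_inbdp => //; by rewrite HT mem_iota /= ltn_ord.
  + move=> f Hfar.
    have [M [M0 HM Hacc]] := @sound R m l u a r b HT k B D HD H1 f.
    rewrite -Ec in HM.
    set G := \sum_x D x * (good l u (fun y => f (inord y)) (Node a r b) x)%:R in Hacc.
    set S := [seq x <- iota 0 m.+1 | good l u (fun y => f (inord y)) (Node a r b) x].
    have Hr : r \in S.
      rewrite mem_filter; apply/andP; split.
        by rewrite /good /= eqxx /= andbT /Cnsc leqnn Cns_refl.
      by rewrite -HT /= mem_cat in_cons eqxx orbT.
    have [g [Hg Hfg]] := @ext_g R m l u Hlu f r S Hr
      (fun x y Hx Hy Hxy => ltac:(
        apply: (@good_pair R l u _ (Node a r b) x y) => //;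
        [ rewrite HT -sorted_pairwise; [exact: iota_ltn_sorted | exact: ltn_trans]
        | by rewrite HT; move: Hx; rewrite mem_filter => /andP[]
        | by rewrite HT; move: Hy; rewrite mem_filter => /andP[]
        | by move: Hx; rewrite mem_filter => /andP[]
        | by move: Hy; rewrite mem_filter => /andP[] ])).
    have Hd := Hfar g Hg.
    have Hd2 := @dist_bound R m D f g S HD Hfg.
    have HS (x : 'I_m.+1) : (val x \notin S) = ~~ good l u (fun y => f (inord y)) (Node a r b) x.
      by rewrite mem_filter mem_iota /= ltn_ord andbT.
    have HG : G + \sum_(x < m.+1 | val x \notin S) D x = 1.
      rewrite -H1 [RHS](bigID (fun x : 'I_m.+1 => good l u (fun y => f (inord y)) (Node a r b) x)) /=.
      congr (_ + _); last by apply: eq_bigl => x; exact: HS.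
      rewrite /G [RHS]big_mkcond /=.
      apply: eq_bigr => x _; case: ifP => _; by rewrite ?mulr1 ?mulr0.
    have G0 : 0 <= G by apply: sumr_ge0 => x _; rewrite mulr_ge0.
    have HGk : G ^+ k <= (1 - eps) ^+ k.
      by rewrite lerXn2r // ?nnegrE; lra.
    have Hk3 : 3 <= k%:R * eps.
      by move: hk1; rewrite ltr_pdivrMr // => /ltW.
    have Hps := @pow_small R eps k He e1 Hk3.
    have hke : k%:R * eps <= 3%:R + eps.
      have E3 : (3%:R / eps + 1) * eps = 3%:R + eps by field; rewrite gt_eqF.
      by rewrite -E3 ler_wpM2r // ltW.
    have hBe : 24%:R * Dl - eps < B%:R * eps.
      have E24 : 24%:R * eps^-1 * Dl * eps = 24%:R * Dl.
        by field; rewrite gt_eqF.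
      have := hB2; rewrite -(ltr_pM2r He) E24 mulrDl mul1r; lra.
    have hMe : B%:R * M * eps <= k%:R * c * eps by rewrite ler_wpM2r // ltW.
    have hc0 : 0 <= c by rewrite Ec; apply: expge0.
    have hkc : k%:R * c * eps <= c * 4%:R by nra.
    have hM : M * (483%:R) < 88%:R.
      have hBe0 : 0 < B%:R * eps by lra.
      nra.
    have hacc : 2%:R / 3%:R < 1 - G ^+ k - M by lra.
    lra.
-
  exists 0%N, unit, (fun _ => 1), (fun _ => Decide R m.+1 true).
  split; first by rewrite mulr_ge0 // mulr_ge0 // invr_ge0 ltW.
  split => //.
  + by rewrite sumr_const card_unit.
  + by move=> w; constructor.
  + move=> f _; rewrite /accept_prob /= sumr_const card_unit; lra.
  + move=> f Hfar; exfalso.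
    move: Hc; rewrite negb_and -!ltNge => /orP[hD|h1].
    * have [c [T [HbT ->]] Hc] := @inf_adherent R E (eps - Dl) (ltac:(by rewrite subr_gt0)) hinf.
      have Hc' : exp_depth D T < Dl + (eps - Dl) := Hc.
      have [a [r [b ET]]] := node T HbT; subst T.
      have [g [Hg Hd]] := @close_g R m l u f D r Hlu HD.
      have := Hfar g Hg; move: Hd.
      have : \sum_(x < m.+1 | val x \notin [:: r]) D x <= exp_depth D (Node a r b).
        rewrite /exp_depth big_mkcond; apply: ler_sum => x _.
        case: ifP => Hx; last by rewrite mulr_ge0.
        rewrite ler_peMr //; rewrite ler1n lt0n; apply/negP => /eqP /depth0 Ex.
        by move/negP: Hx; apply; rewrite inE; apply/eqP; exact: Ex.
      lra.
    * have [g [Hg Hd]] := @close_g R m l u f D 0%N Hlu HD.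
      have := Hfar g Hg; move: Hd.
      have : \sum_(x < m.+1 | val x \notin [:: 0%N]) D x <= 1.
        rewrite -H1 big_mkcond; apply: ler_sum => x _; case: ifP => // _.
      lra.
Qed.
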